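(* The assignment $\sigma(V)=V$ and $\sigma([V\to X\leftarrow W])=[V\leftarrow V\times_X W\rightarrow W]$ (with $V\times_X W$ the pullback in $\mathcal{E}_q^{deg}$) gives a well-defined functor $\sigma:\mathcal{T}_q\to\mathcal{S}_q$, and $\sigma$ is monoidal with respect to the orthogonal sums $\perp$ on $\mathcal{T}_q$ and on $\mathcal{S}_q$.
   Context: All vector spaces over $\mathbb{F}_2$. $\mathcal{E}_q^{deg}$: objects finite-dimensional quadratic spaces (possibly degenerate), morphisms injective linear maps preserving quadratic forms; pullback of $\alpha:D\to V$, $\beta:D'\to V$ is $\alpha(D)\cap\beta(D')$ with restricted form. $\mathrm{Sp}(\mathcal{E}_q^{deg})$: morphisms spans $[V\leftarrow D\rightarrow W]$ up to iso of $D$, composed by pullback. $\mathcal{S}_q$: its full subcategory on non-degenerate spaces. $\mathcal{E}_q$: full subcategory of $\mathcal{E}_q^{deg}$ on non-degenerate spaces. Pseudo push-out of $f:V\to W=f(V)\perp V'$, $g:V\to X=g(V)\perp V''$ in $\mathcal{E}_q$: $V\perp V'\perp V''$ with maps $f(v)+v'\mapsto v+v'$, $g(v)+v''\mapsto v+v''$. $\mathcal{T}_q$: objects of $\mathcal{E}_q$; morphisms classes of cospans $[V\to X\leftarrow W]$ in $\mathcal{E}_q$ modulo the equivalence relation generated by existence of an $\mathcal{E}_q$-morphism between middle objects compatible with the legs; composition via pseudo push-out. The orthogonal sum on $\mathcal{T}_q$ (resp. $\mathcal{S}_q$) is $V\perp W$ on objects and componentwise orthogonal sum of cospans (resp. spans)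 on morphisms. *)

(* Defs.v *)
From HB Require Import structures.
From mathcomp Require Import all_boot all_order all_algebra.
From Stdlib Require Import Relations.
Set Implicit Arguments. Unset Strict Implicit. Unset Printing Implicit Defensive.
Import GRing.Theory.
Local Open Scope ring_scope.

(* A finite-dimensional quadratic space over F_2: F_2^n (row vectors) with
   quadratic form q(x) = x Q x^T.  Every quadratic form over F_2 is of this
   shape (Q upper triangular, say); Q is only relevant through q. *)
Record qspace := QSpace { qdim : nat; qmat : 'M['F_2]_qdim }.

Definition qf (n : nat) (Q : 'M['F_2]_n) (x : 'rV['F_2]_n) : 'F_2 :=
  (x *m Q *m x^T) ord0 ord0.

(* polar bilinear form b(x,y) = q(x+y)-q(x)-q(y) = x (Q + Q^T) y^T *)
Definition polar (V : qspace) : 'M['F_2]_(qdim V) := qmat V + (qmat V)^T.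

Definition nondeg (V : qspace) : Prop := polar V \in unitmx.

(* morphisms of E_q^deg: injective linear maps preserving quadratic forms
   (row-vector convention: x |-> x *m A) *)
Definition is_qmor (V W : qspace) (A : 'M['F_2]_(qdim V, qdim W)) : Prop :=
  row_free A /\ forall x : 'rV_(qdim V), qf (qmat W) (x *m A) = qf (qmat V) x.

Definition qsum (V W : qspace) : qspace :=
  QSpace (block_mx (qmat V) 0 0 (qmat W)).

Record cospan (V W : qspace) := Cospan {
  cmid : qspace;
  cleft : 'M['F_2]_(qdim V, qdim cmid);
  cright : 'M['F_2]_(qdim W, qdim cmid) }.

Definition cosp_valid (V W : qspace) (c : cospan V W) : Prop :=
  [/\ nondeg V, nondeg W, nondeg (cmid c), is_qmor (cleft c) & is_qmor (cright c)].

Definition cosp_gen (V W : qspace) (c1 c2 : cospan V W) : Prop :=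
  cosp_valid c1 /\ cosp_valid c2 /\
  exists h : 'M['F_2]_(qdim (cmid c1), qdim (cmid c2)),
    [/\ is_qmor h, cleft c1 *m h = cleft c2 & cright c1 *m h = cright c2].

Definition cosp_equiv (V W : qspace) : relation (cospan V W) :=
  clos_refl_sym_trans (cospan V W) (@cosp_gen V W).

Definition cosp_id (V : qspace) : cospan V V := @Cospan V V V 1%:M 1%:M.

(* orthogonal complement of the image of f : W -> X inside X, with a basis *)
Definition compl_basis (W X : qspace) (f : 'M['F_2]_(qdim W, qdim X)) :=
  row_base (kermx (f *m polar X)^T).

Definition compl_dim (W X : qspace) (f : 'M['F_2]_(qdim W, qdim X)) : nat :=
  \rank (kermx (f *m polar X)^T).

(* the pseudo push-out W ⊥ X' ⊥ Y' of f : W -> X, g : W -> Y *)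
Definition ppo_obj (W X Y : qspace) (f : 'M['F_2]_(qdim W, qdim X))
    (g : 'M['F_2]_(qdim W, qdim Y)) : qspace :=
  @QSpace (qdim W + compl_dim f + compl_dim g)
    (block_mx (block_mx (qmat W) 0 0
                 (compl_basis f *m qmat X *m (compl_basis f)^T)) 0
              0 (compl_basis g *m qmat Y *m (compl_basis g)^T)).

(* X -> W ⊥ X' ⊥ Y',  f(v) + x' |-> v + x' *)
Definition ppo_inl (W X Y : qspace) (f : 'M['F_2]_(qdim W, qdim X))
    (g : 'M['F_2]_(qdim W, qdim Y)) : 'M['F_2]_(qdim X, qdim (ppo_obj f g)) :=
  pinvmx (col_mx f (compl_basis f)) *m row_mx 1%:M 0.

(* Y -> W ⊥ X' ⊥ Y',  g(v) + y' |-> v + y' *)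
Definition ppo_inr (W X Y : qspace) (f : 'M['F_2]_(qdim W, qdim X))
    (g : 'M['F_2]_(qdim W, qdim Y)) : 'M['F_2]_(qdim Y, qdim (ppo_obj f g)) :=
  pinvmx (col_mx g (compl_basis g)) *m
    col_mx (row_mx (row_mx (1%:M : 'M_(qdim W)) 0) 0) (row_mx 0 1%:M).

Definition cosp_comp (V W U : qspace) (c1 : cospan V W) (c2 : cospan W U)
  : cospan V U :=
  @Cospan V U (ppo_obj (cright c1) (cleft c2))
    (cleft c1 *m ppo_inl (cright c1) (cleft c2))
    (cright c2 *m ppo_inr (cright c1) (cleft c2)).

Definition cosp_sum (V W V' W' : qspace) (c : cospan V W) (c' : cospan V' W')
  : cospan (qsum V V') (qsum W W') :=
  @Cospan (qsum V V') (qsum W W') (qsum (cmid c) (cmid c'))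
    (block_mx (cleft c) 0 0 (cleft c')) (block_mx (cright c) 0 0 (cright c')).

Record span (V W : qspace) := Span {
  smid : qspace;
  sleft : 'M['F_2]_(qdim smid, qdim V);
  sright : 'M['F_2]_(qdim smid, qdim W) }.

Definition span_valid (V W : qspace) (s : span V W) : Prop :=
  is_qmor (sleft s) /\ is_qmor (sright s).

Definition span_iso (V W : qspace) (s1 s2 : span V W) : Prop :=
  exists P : 'M['F_2]_(qdim (smid s1), qdim (smid s2)),
    [/\ is_qmor P, row_full P, sleft s1 = P *m sleft s2
      & sright s1 = P *m sright s2].

Definition span_id (V : qspace) : span V V := @Span V V V 1%:M 1%:M.

(* pullback in E_q^deg of A : Da -> Z, B : Db -> Z : the intersection of the
   images, with the restricted form, and the induced maps *)
Definition pb_basis (Z : qspace) (a b : nat) (A : 'M['F_2]_(a, qdim Z))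
    (B : 'M['F_2]_(b, qdim Z)) := row_base (A :&: B)%MS.

Definition pb_obj (Z : qspace) (a b : nat) (A : 'M['F_2]_(a, qdim Z))
    (B : 'M['F_2]_(b, qdim Z)) : qspace :=
  QSpace (pb_basis A B *m qmat Z *m (pb_basis A B)^T).

Definition pb_left (Z : qspace) (a b : nat) (A : 'M['F_2]_(a, qdim Z))
    (B : 'M['F_2]_(b, qdim Z)) : 'M['F_2]_(qdim (pb_obj A B), a) :=
  pb_basis A B *m pinvmx A.

Definition pb_right (Z : qspace) (a b : nat) (A : 'M['F_2]_(a, qdim Z))
    (B : 'M['F_2]_(b, qdim Z)) : 'M['F_2]_(qdim (pb_obj A B), b) :=
  pb_basis A B *m pinvmx B.

Definition span_comp (V W U : qspace) (s1 : span V W) (s2 : span W U)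
  : span V U :=
  @Span V U (@pb_obj W _ _ (sright s1) (sleft s2))
    (pb_left (sright s1) (sleft s2) *m sleft s1)
    (pb_right (sright s1) (sleft s2) *m sright s2).

Definition span_sum (V W V' W' : qspace) (s : span V W) (s' : span V' W')
  : span (qsum V V') (qsum W W') :=
  @Span (qsum V V') (qsum W W') (qsum (smid s) (smid s'))
    (block_mx (sleft s) 0 0 (sleft s')) (block_mx (sright s) 0 0 (sright s')).

Definition sigma (V W : qspace) (c : cospan V W) : span V W :=
  @Span V W (@pb_obj (cmid c) _ _ (cleft c) (cright c))
    (pb_left (cleft c) (cright c)) (pb_right (cleft c) (cright c)).

(* Main.v *)
Require Import Defs.
From HB Require Import structures.
From mathcomp Require Import all_boot all_order all_algebra.
From mathcomp Require Import ring.
From Stdlib Require Import Relations.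
Set Implicit Arguments. Unset Strict Implicit. Unset Printing Implicit Defensive.
Import GRing.Theory.
Local Open Scope ring_scope.

Lemma eq_by_mem n m1 m2 (A : 'M['F_2]_(m1, n)) (B : 'M['F_2]_(m2, n)) :
  (forall u : 'rV_n, (u <= A)%MS = (u <= B)%MS) -> (A == B)%MS.
Proof.
move=> H; apply/andP; split; apply/row_subP => i.
  by rewrite -H row_sub.
by rewrite H row_sub.
Qed.

Lemma row_free_rowmx m n1 n2 (L : 'M['F_2]_(m, n1)) (R : 'M['F_2]_(m, n2)) :
  row_free L -> row_free (row_mx L R).
Proof.
move=> fL; apply: inj_row_free => v; rewrite mul_mx_row => /eqP.
rewrite -row_mx0 => /eqP /eq_row_mx [/eqP + _].
by rewrite mulmx_free_eq0 // => /eqP.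
Qed.

Lemma row_free_mul m n p (A : 'M['F_2]_(m, n)) (B : 'M['F_2]_(n, p)) :
  row_free A -> row_free B -> row_free (A *m B).
Proof.
move=> fA fB; apply: inj_row_free => v; rewrite mulmxA => /eqP.
by rewrite mulmx_free_eq0 // mulmx_free_eq0 // => /eqP.
Qed.

Lemma iso_of_J (V W : qspace) (s1 s2 : Defs.span V W) (F : 'rV_(qdim V + qdim W) -> 'F_2) :
  row_free (row_mx (sleft s1) (sright s1)) ->
  row_free (row_mx (sleft s2) (sright s2)) ->
  (row_mx (sleft s1) (sright s1) == row_mx (sleft s2) (sright s2))%MS ->
  (forall x, qf (qmat (smid s1)) x = F (x *m row_mx (sleft s1) (sright s1))) ->
  (forall x, qf (qmat (smid s2)) x = F (x *m row_mx (sleft s2) (sright s2))) ->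
  span_iso s1 s2.
Proof.
set J1 := row_mx _ _; set J2 := row_mx _ _ => f1 f2 eqJ F1 F2.
have sJ : (J1 <= J2)%MS by case/andP: eqJ.
have rJ : \rank J1 = \rank J2 by apply: eqmx_rank.
set P := J1 *m pinvmx J2.
have eP : J1 = P *m J2 by rewrite /P mulmxKpV.
have rP : \rank P = qdim (smid s1).
  apply/eqP; rewrite eqn_leq rank_leq_row /=.
  by rewrite -{1}(eqP f1) eP mxrankM_maxl.
exists P; split.
- split; first by rewrite /row_free rP.
  by move=> x; rewrite F1 F2 eP mulmxA.
- by rewrite /row_full rP -(eqP f1) rJ (eqP f2).
- by move: eP; rewrite /J1 /J2 mul_mx_row => /eq_row_mx [].
- by move: eP; rewrite /J1 /J2 mul_mx_row => /eq_row_mx [].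
Qed.

Section PB.
Variables (Z : qspace) (a b : nat) (A : 'M['F_2]_(a, qdim Z)) (B : 'M['F_2]_(b, qdim Z)).

Lemma pb_subA : (pb_basis A B <= A)%MS.
Proof. by rewrite /pb_basis eq_row_base capmxSl. Qed.
Lemma pb_subB : (pb_basis A B <= B)%MS.
Proof. by rewrite /pb_basis eq_row_base capmxSr. Qed.

Lemma pb_leftA : pb_left A B *m A = pb_basis A B.
Proof. by rewrite /pb_left mulmxKpV // pb_subA. Qed.
Lemma pb_rightB : pb_right A B *m B = pb_basis A B.
Proof. by rewrite /pb_right mulmxKpV // pb_subB. Qed.

Lemma pb_left_free : row_free (pb_left A B).
Proof.
apply/eqP/eqP; rewrite eqn_leq rank_leq_row /=.
have := mxrankM_maxl (pb_left A B) A; rewrite pb_leftA.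
by rewrite (eqP (row_base_free _)).
Qed.
Lemma pb_right_free : row_free (pb_right A B).
Proof.
apply/eqP/eqP; rewrite eqn_leq rank_leq_row /=.
have := mxrankM_maxl (pb_right A B) B; rewrite pb_rightB.
by rewrite (eqP (row_base_free _)).
Qed.

Lemma qf_pb x : qf (qmat (pb_obj A B)) x = qf (qmat Z) (x *m pb_basis A B).
Proof. rewrite /qf /pb_obj /=. rewrite [(x *m _)^T]trmx_mul !mulmxA. done. Qed.

Lemma pb_mem (v : 'rV_a) (w : 'rV_b) : row_free A -> row_free B ->
  (row_mx v w <= row_mx (pb_left A B) (pb_right A B))%MS = (v *m A == w *m B).
Proof.
move=> fA fB; apply/idP/eqP.
  case/submxP => z; rewrite mul_mx_row => /eq_row_mx [-> ->].
  by rewrite -[z *m _ *m A]mulmxA -[z *m _ *m B]mulmxA pb_leftA pb_rightB.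
move=> e.
have : (v *m A <= pb_basis A B)%MS.
  by rewrite /pb_basis eq_row_base sub_capmx submxMl e submxMl.
case/submxP => z ez; apply/submxP; exists z; rewrite mul_mx_row.
congr row_mx.
  by rewrite /pb_left mulmxA -ez mulmxKp.
by rewrite /pb_right mulmxA -ez e mulmxKp.
Qed.
End PB.

Lemma mul_row_diag m1 m2 n1 n2 (x : 'rV['F_2]_m1) (y : 'rV['F_2]_m2)
  (A : 'M['F_2]_(m1, n1)) (B : 'M['F_2]_(m2, n2)) :
  row_mx x y *m block_mx A 0 0 B = row_mx (x *m A) (y *m B).
Proof. by rewrite mul_row_block !mulmx0 addr0 add0r. Qed.

Lemma qf_block m1 m2 (Q1 : 'M['F_2]_m1) (Q2 : 'M['F_2]_m2) x y :
  qf (block_mx Q1 0 0 Q2) (row_mx x y) = qf Q1 x + qf Q2 y.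
Proof. by rewrite /qf mul_row_diag tr_row_mx mul_row_col mxE. Qed.

Lemma row_mx_eqb m n1 n2 (a c : 'M['F_2]_(m, n1)) (b d : 'M['F_2]_(m, n2)) :
  (row_mx a b == row_mx c d) = (a == c) && (b == d).
Proof.
apply/eqP/andP => [/eq_row_mx [-> ->] // | [/eqP -> /eqP ->] //].
Qed.

Lemma block_free m1 m2 n1 n2 (A : 'M['F_2]_(m1, n1)) (B : 'M['F_2]_(m2, n2)) :
  row_free A -> row_free B -> row_free (block_mx A 0 0 B).
Proof.
move=> fA fB; apply: inj_row_free => u.
rewrite -(hsubmxK u) mul_row_diag => /eqP; rewrite -row_mx0 row_mx_eqb.
by rewrite !mulmx_free_eq0 // => /andP [/eqP -> /eqP ->]; rewrite row_mx0.
Qed.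

Lemma block_qmor (V V' W W' : qspace) (A : 'M_(qdim V, qdim W)) (A' : 'M_(qdim V', qdim W')) :
  is_qmor A -> is_qmor A' ->
  @is_qmor (qsum V V') (qsum W W') (block_mx A 0 0 A').
Proof.
move=> [fA qA] [fA' qA']; split; first exact: block_free.
by move=> u; rewrite /= -(hsubmxK u) mul_row_diag !qf_block qA qA'.
Qed.

Lemma pb_left_qf (V Z : qspace) (b : nat) (A : 'M_(qdim V, qdim Z)) (B : 'M_(b, qdim Z)) :
  is_qmor A -> forall x, qf (qmat (pb_obj A B)) x = qf (qmat V) (x *m pb_left A B).
Proof. by move=> [_ qA] x; rewrite -qA -mulmxA pb_leftA qf_pb. Qed.

Lemma pb_right_qf (W Z : qspace) (a : nat) (A : 'M_(a, qdim Z)) (B : 'M_(qdim W, qdim Z)) :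
  is_qmor B -> forall x, qf (qmat (pb_obj A B)) x = qf (qmat W) (x *m pb_right A B).
Proof. by move=> [_ qB] x; rewrite -qB -mulmxA pb_rightB qf_pb. Qed.

Lemma sigma_valid (V W : qspace) (c : cospan V W) :
  is_qmor (cleft c) -> is_qmor (cright c) -> span_valid (sigma c).
Proof.
move=> hA hB; split; split => /=.
- exact: pb_left_free.
- by move=> x; rewrite -pb_left_qf.
- exact: pb_right_free.
- by move=> x; rewrite -pb_right_qf.
Qed.

Definition Jsp (V W : qspace) (s : Defs.span V W) := row_mx (sleft s) (sright s).

Lemma Jsp_free (V W : qspace) (s : Defs.span V W) : row_free (sleft s) -> row_free (Jsp s).
Proof. exact: row_free_rowmx. Qed.

Lemma Jsp_qf (V W : qspace) (s : Defs.span V W) :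
  (forall x, qf (qmat (smid s)) x = qf (qmat V) (x *m sleft s)) ->
  forall x, qf (qmat (smid s)) x = (fun u => qf (qmat V) (lsubmx u)) (x *m Jsp s).
Proof. by move=> h x; rewrite /Jsp mul_mx_row row_mxKl h. Qed.

Lemma iso_J (V W : qspace) (s1 s2 : Defs.span V W) :
  row_free (sleft s1) -> row_free (sleft s2) ->
  (forall x, qf (qmat (smid s1)) x = qf (qmat V) (x *m sleft s1)) ->
  (forall x, qf (qmat (smid s2)) x = qf (qmat V) (x *m sleft s2)) ->
  (Jsp s1 == Jsp s2)%MS -> span_iso s1 s2.
Proof.
move=> f1 f2 q1 q2 e; apply: (iso_of_J (F := fun u => qf (qmat V) (lsubmx u))).
- exact: row_free_rowmx.
- exact: row_free_rowmx.
- exact: e.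
- exact: Jsp_qf.
- exact: Jsp_qf.
Qed.

Lemma sigma_mem (V W : qspace) (c : cospan V W) (v : 'rV_(qdim V)) (w : 'rV_(qdim W)) :
  row_free (cleft c) -> row_free (cright c) ->
  (row_mx v w <= Jsp (sigma c))%MS = (v *m cleft c == w *m cright c).
Proof. exact: pb_mem. Qed.

Lemma span_mem (V W : qspace) (s : Defs.span V W) (v : 'rV_(qdim V)) (w : 'rV_(qdim W)) :
  (row_mx v w <= Jsp s)%MS <-> exists z, v = z *m sleft s /\ w = z *m sright s.
Proof.
split.
  by case/submxP => z; rewrite /Jsp mul_mx_row => /eq_row_mx [-> ->]; exists z.
by case=> z [-> ->]; apply/submxP; exists z; rewrite /Jsp mul_mx_row.
Qed.

Lemma iso_sigma (V W : qspace) (c : cospan V W) (s : Defs.span V W) :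
  is_qmor (cleft c) -> is_qmor (cright c) ->
  row_free (sleft s) ->
  (forall x, qf (qmat (smid s)) x = qf (qmat V) (x *m sleft s)) ->
  (forall (v : 'rV_(qdim V)) (w : 'rV_(qdim W)), (row_mx v w <= Jsp s)%MS = (v *m cleft c == w *m cright c)) ->
  span_iso (sigma c) s.
Proof.
move=> hA hB fs qs ms; apply: iso_J => //.
- exact: pb_left_free.
- exact: pb_left_qf.
- apply: eq_by_mem => u; rewrite -(hsubmxK u) ms sigma_mem //.
  by case: hA. by case: hB.
Qed.

Lemma addmE m n (A B : 'M['F_2]_(m, n)) i j : (A + B) i j = A i j + B i j.
Proof. by rewrite mxE. Qed.

Lemma qf_add n (Q : 'M['F_2]_n) (x y : 'rV['F_2]_n) :
  qf Q (x + y) = qf Q x + qf Q y + (x *m (Q + Q^T) *m y^T) ord0 ord0.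
Proof.
have e : (y *m Q *m x^T) ord0 ord0 = (x *m Q^T *m y^T) ord0 ord0.
  transitivity ((y *m Q *m x^T)^T ord0 ord0); first by rewrite [RHS]mxE.
  by rewrite !trmx_mul trmxK mulmxA.
rewrite /qf linearD /= !mulmxDl !mulmxDr !mulmxDl !addmE e.
ring.
Qed.

Lemma qf_conj n m (B : 'M['F_2]_(m, n)) (Q : 'M['F_2]_n) x :
  qf (B *m Q *m B^T) x = qf Q (x *m B).
Proof. by rewrite /qf [(x *m _)^T]trmx_mul !mulmxA. Qed.

Lemma qf0 n (Q : 'M['F_2]_n) : qf Q 0 = 0.
Proof. by rewrite /qf !mul0mx mxE. Qed.

Lemma mx_eq_bil n m (A B : 'M['F_2]_(n, m)) :
  (forall (x : 'rV_n) (y : 'rV_m), (x *m A *m y^T) 0 0 = (x *m B *m y^T) 0 0) -> A = B.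
Proof.
move=> H; apply/matrixP => i j; have := H (delta_mx 0 i) (delta_mx 0 j).
by rewrite -!rowE trmx_delta -!colE !mxE.
Qed.

Lemma polar_sym (X : qspace) : (polar X)^T = polar X.
Proof. by rewrite /polar linearD /= trmxK addrC. Qed.

Lemma qmor_polar (W X : qspace) (g : 'M_(qdim W, qdim X)) :
  is_qmor g -> g *m polar X *m g^T = polar W.
Proof.
move=> [_ qg]; apply: mx_eq_bil => x y.
have h1 := qf_add (qmat X) (x *m g) (y *m g).
have h2 := qf_add (qmat W) x y.
rewrite -mulmxDl !qg h2 in h1.
have -> : x *m (g *m polar X *m g^T) *m y^T = x *m g *m polar X *m (y *m g)^T.
  by rewrite trmx_mul !mulmxA.
rewrite /polar.
move: h1; set a := qf _ x; set b := qf _ y => h1.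
have : forall u v w : 'F_2, a + b + u = a + b + v -> u = v.
  by move=> u v _ /addrI.
by move/(_ _ _ a h1) => ->.
Qed.

Section Compl.
Variables (W X : qspace) (g : 'M['F_2]_(qdim W, qdim X)).
Hypotheses (nW : nondeg W) (hg : is_qmor g).

Let K := compl_basis g.
Let CX := col_mx g K.

Lemma K_orth : K *m (g *m polar X)^T = 0.
Proof. by apply/sub_kermxP; rewrite /K /compl_basis eq_row_base. Qed.

Lemma gPK : g *m polar X *m K^T = 0.
Proof.
have := congr1 trmx K_orth; rewrite trmx0 => <-.
by rewrite [(K *m _)^T]trmx_mul trmxK.
Qed.

Lemma rank_gP : \rank (g *m polar X)^T = qdim W.
Proof.
rewrite mxrank_tr; apply/eqP; rewrite eqn_leq rank_leq_row /=.
have := mxrankM_maxl (g *m polar X) g^T; rewrite qmor_polar //.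
by rewrite mxrank_unit.
Qed.

Lemma compl_dimE : compl_dim g = (qdim X - qdim W)%N.
Proof. by rewrite /compl_dim mxrank_ker rank_gP. Qed.

Lemma rank_K : \rank K = compl_dim g.
Proof. by rewrite /K /compl_basis /compl_dim (eqP (row_base_free _)). Qed.

Lemma WleX : (qdim W <= qdim X)%N.
Proof. by case: hg => /eqP e _; rewrite -e rank_leq_col. Qed.

Lemma cap0 : (g :&: K)%MS = 0.
Proof.
apply/eqP/rowV0P => v; rewrite sub_capmx => /andP [/submxP [a ->] sK].
have : (a *m g <= kermx (g *m polar X)^T)%MS.
  by apply: submx_trans sK _; rewrite /K /compl_basis eq_row_base.
move/sub_kermxP; rewrite trmx_mul polar_sym -mulmxA (mulmxA g) qmor_polar //.
by move/eqP; rewrite mulmx_free_eq0 ?row_free_unit // => /eqP ->; rewrite mul0mx.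
Qed.

Lemma rank_CX : \rank CX = qdim X.
Proof.
rewrite /CX -addsmxE mxrank_disjoint_sum ?cap0 // rank_K compl_dimE.
by case: hg => /eqP e _; rewrite e subnKC // WleX.
Qed.

Lemma CX_full : row_full CX.
Proof. by rewrite /row_full rank_CX. Qed.

Lemma CX_free : row_free CX.
Proof. by rewrite /row_free rank_CX; have := compl_dimE; rewrite /compl_dim => ->; rewrite subnKC // WleX. Qed.

Lemma CX_dec (x : 'rV_(qdim X)) : x = x *m pinvmx CX *m CX.
Proof. by rewrite mulmxKpV // submx_full // CX_full. Qed.

Lemma CX_inv (t : 'rV_(qdim W + compl_dim g)) : t *m CX *m pinvmx CX = t.
Proof. by rewrite mulmxKp // CX_free. Qed.

Lemma qf_dec s1 s2 :
  qf (qmat X) (row_mx s1 s2 *m CX) = qf (qmat W) s1 + qf (K *m qmat X *m K^T) s2.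
Proof.
rewrite /CX mul_row_col qf_add qf_conj; case: hg => _ ->.
have -> : s1 *m g *m (qmat X + (qmat X)^T) *m (s2 *m K)^T = 0.
  by rewrite trmx_mul -!mulmxA (mulmxA g) (mulmxA (g *m _)) -/(polar X) gPK mul0mx mulmx0.
by rewrite mxE addr0.
Qed.
End Compl.

Section PPO.
Variables (W X Y : qspace) (f : 'M['F_2]_(qdim W, qdim X)) (g : 'M['F_2]_(qdim W, qdim Y)).

Lemma inl_eq (x : 'rV_(qdim X)) :
  x *m ppo_inl f g = row_mx (x *m pinvmx (col_mx f (compl_basis f))) 0.
Proof. by rewrite /ppo_inl mulmxA mul_mx_row mulmx1 mulmx0. Qed.

Lemma E_eq (t : 'rV_(qdim W + compl_dim g)) :
  t *m col_mx (row_mx (row_mx (1%:M : 'M['F_2]_(qdim W)) 0) 0) (row_mx 0 (1%:M : 'M['F_2]_(compl_dim g)))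
  = row_mx (row_mx (lsubmx t) (0 : 'rV['F_2]_(compl_dim f))) (rsubmx t).
Proof.
rewrite -{1}(hsubmxK t) mul_row_col !mul_mx_row !mulmx1 !mulmx0.
by rewrite -[0 : 'rV_(qdim W + compl_dim f)]row_mx0 add_row_mx add_row_mx !addr0 !add0r.
Qed.

Lemma inr_eq (y : 'rV_(qdim Y)) :
  y *m ppo_inr f g = row_mx (row_mx (lsubmx (y *m pinvmx (col_mx g (compl_basis g))))
     (0 : 'rV['F_2]_(compl_dim f))) (rsubmx (y *m pinvmx (col_mx g (compl_basis g)))).
Proof. by rewrite /ppo_inr mulmxA E_eq. Qed.

Lemma qf_ppo a b c :
  qf (qmat (ppo_obj f g)) (row_mx (row_mx a b) c) =
  qf (qmat W) a + qf (compl_basis f *m qmat X *m (compl_basis f)^T) b +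
  qf (compl_basis g *m qmat Y *m (compl_basis g)^T) c.
Proof. by rewrite /= !qf_block. Qed.

Hypotheses (nW : nondeg W) (hf : is_qmor f) (hg : is_qmor g).

Lemma qmor_inl : @is_qmor X (ppo_obj f g) (ppo_inl f g).
Proof.
split.
  apply: row_free_mul; first exact/pinvmx_free/CX_full.
  by apply: row_free_rowmx; rewrite row_free_unit unitmx1.
move=> x; rewrite inl_eq {2}(CX_dec nW hf x).
set t := x *m _; rewrite -(hsubmxK t) qf_ppo qf0 addr0 qf_dec //.
Qed.

Lemma qmor_inr : @is_qmor Y (ppo_obj f g) (ppo_inr f g).
Proof.
split.
  apply: row_free_mul; first exact/pinvmx_free/CX_full.
  apply: inj_row_free => t; rewrite E_eq => /eqP.
  rewrite -!row_mx0 !row_mx_eqb eqxx andbT => /andP [/eqP h1 /eqP h2].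
  by rewrite -(hsubmxK t) h1 h2 row_mx0.
move=> y; rewrite inr_eq; have := CX_dec nW hg y; set t := y *m _ => ey.
rewrite [in RHS]ey -(hsubmxK t) row_mxKl row_mxKr qf_ppo qf0 addr0 qf_dec //.
Qed.

Lemma ppo_key (x : 'rV_(qdim X)) (y : 'rV_(qdim Y)) :
  x *m ppo_inl f g = y *m ppo_inr f g <-> exists w, x = w *m f /\ y = w *m g.
Proof.
rewrite inl_eq inr_eq; split.
  set s := x *m _; set t := y *m _.
  rewrite -{1}(hsubmxK s) => /eq_row_mx [/eq_row_mx [e1 e2] e3].
  exists (lsubmx s); split.
    rewrite (CX_dec nW hf x) -/s -[s in LHS](hsubmxK s) e2 mul_row_col mul0mx addr0.
    by [].
  have ey := CX_dec nW hg y; rewrite -/t in ey.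
  rewrite {1}ey -[t in LHS](hsubmxK t) -e3 e1 mul_row_col mul0mx addr0. by [].
case=> w [-> ->].
have -> : w *m f = row_mx w (0 : 'rV['F_2]_(compl_dim f)) *m col_mx f (compl_basis f).
  by rewrite mul_row_col mul0mx addr0.
have -> : w *m g = row_mx w (0 : 'rV['F_2]_(compl_dim g)) *m col_mx g (compl_basis g).
  by rewrite mul_row_col mul0mx addr0.
by rewrite !CX_inv // row_mxKl row_mxKr.
Qed.
End PPO.

Arguments span_mem {V W s v w}.

Lemma gen_J (V W : qspace) (c c' : cospan V W) :
  cosp_gen c c' -> (Jsp (sigma c) == Jsp (sigma c'))%MS.
Proof.
move=> [[_ _ _ [fA _] [fB _]] [[_ _ _ [fA' _] [fB' _]] [h [[fh _] eA eB]]]].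
apply: eq_by_mem => u; rewrite -(hsubmxK u) !sigma_mem // -eA -eB !mulmxA.
apply/eqP/eqP => [-> // | ]; exact: row_free_inj.
Qed.

Lemma equiv_J (V W : qspace) (c c' : cospan V W) :
  cosp_equiv c c' -> (Jsp (sigma c) == Jsp (sigma c'))%MS.
Proof.
elim => [x y /gen_J // | x | x y _ /andP [h1 h2] | x y z _ /andP [h1 h2] _ /andP [h3 h4]].
- by rewrite /= submx_refl.
- by apply/andP.
- by apply/andP; split; [apply: submx_trans h3 | apply: submx_trans h2].
Qed.

Lemma part2 (V W : qspace) (c c' : cospan V W) :
  nondeg V -> nondeg W -> cosp_valid c -> cosp_valid c' ->
  cosp_equiv c c' -> span_iso (sigma c) (sigma c').
Proof.
move=> _ _ [_ _ _ hA hB] [_ _ _ hA' hB'] e; apply: iso_J.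
- exact: pb_left_free.
- exact: pb_left_free.
- exact: pb_left_qf.
- exact: pb_left_qf.
- exact: equiv_J.
Qed.

Lemma part3 (V : qspace) : nondeg V -> span_iso (sigma (cosp_id V)) (span_id V).
Proof.
move=> _; apply: iso_sigma => //=.
- by split; [rewrite row_free_unit unitmx1 | move=> x; rewrite mulmx1].
- by split; [rewrite row_free_unit unitmx1 | move=> x; rewrite mulmx1].
- by rewrite row_free_unit unitmx1.
- by move=> x; rewrite mulmx1.
- move=> v w; rewrite !mulmx1; apply/idP/eqP.
    move=> H; have [z /= [-> ->]] := iffLR (@span_mem V V (span_id V) v w) H.
    by [].
  move=> ->; apply: (iffRL (@span_mem V V (span_id V) w w)).
  by exists w; rewrite /= mulmx1.
Qed.

Lemma part5 (V W V' W' : qspace) (c : cospan V W) (c' : cospan V' W') :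
  cosp_valid c -> cosp_valid c' ->
  span_iso (sigma (cosp_sum c c')) (span_sum (sigma c) (sigma c')).
Proof.
move=> [_ _ _ hA hB] [_ _ _ hA' hB'].
have [fA _] := hA; have [fB _] := hB; have [fA' _] := hA'; have [fB' _] := hB'.
apply: iso_sigma => /=.
- exact: block_qmor.
- exact: block_qmor.
- by apply: block_free; apply: pb_left_free.
- move=> x; rewrite -(hsubmxK x) mul_row_diag !qf_block.
  by rewrite !pb_left_qf.
- move=> v w; rewrite -(hsubmxK v) -(hsubmxK w) !mul_row_diag row_mx_eqb.
  rewrite -!sigma_mem //; apply/idP/andP.
    move/submxP => [z]; rewrite /Jsp /= -(hsubmxK z) mul_mx_row !mul_row_diag.
    case/eq_row_mx => /eq_row_mx [-> ->] /eq_row_mx [-> ->].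
    by split; apply/submxP; [exists (lsubmx z) | exists (rsubmx z)]; rewrite mul_mx_row.
  case=> /submxP [z1 e1] /submxP [z2 e2].
  move: e1 e2; rewrite /Jsp !mul_mx_row => /eq_row_mx [-> ->] /eq_row_mx [-> ->].
  by apply/submxP; exists (row_mx z1 z2); rewrite /= mul_mx_row !mul_row_diag.
Qed.

Lemma qmor_mul (A B C : qspace) (f : 'M_(qdim A, qdim B)) (g : 'M_(qdim B, qdim C)) :
  is_qmor f -> is_qmor g -> is_qmor (f *m g).
Proof.
move=> [ff qf1] [fg qg]; split; first exact: row_free_mul.
by move=> x; rewrite mulmxA qg qf1.
Qed.

Lemma part4 (V W U : qspace) (c1 : cospan V W) (c2 : cospan W U) :
  cosp_valid c1 -> cosp_valid c2 ->
  span_iso (sigma (cosp_comp c1 c2)) (span_comp (sigma c1) (sigma c2)).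
Proof.
move=> [nV nW nX hf1 hg1] [_ nU nY hf2 hg2].
have [[fL1 qL1] [fR1 qR1]] := sigma_valid hf1 hg1.
have [[fL2 qL2] [fR2 qR2]] := sigma_valid hf2 hg2.
have [ff1 _] := hf1; have [fg1 _] := hg1; have [ff2 _] := hf2; have [fg2 _] := hg2.
apply: iso_sigma => /=.
- apply: qmor_mul => //; exact: qmor_inl.
- apply: qmor_mul => //; exact: qmor_inr.
- by apply: row_free_mul; apply: pb_left_free.
- move=> x; rewrite mulmxA.
  have h1 := @pb_left_qf (smid (sigma c1)) W _ (sright (sigma c1)) (sleft (sigma c2)) (conj fR1 qR1).
  have h2 := @pb_left_qf V (cmid c1) _ (cleft c1) (cright c1) hf1.
  exact: (eq_trans (h1 x) (h2 _)).

- move=> v u; rewrite (mulmxA v) (mulmxA u); apply/idP/eqP.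
  + case/submxP => z; rewrite /Jsp /= mul_mx_row => /eq_row_mx [ev eu].
    apply: (iffRL (ppo_key nW hg1 hf2 _ _)).
    exists (z *m pb_left (pb_right (cleft c1) (cright c1)) (pb_left (cleft c2) (cright c2))
              *m pb_right (cleft c1) (cright c1)); split.
      rewrite ev.
      set L1 := pb_left (cleft c1) (cright c1); set R1 := pb_right (cleft c1) (cright c1).
      set L2 := pb_left (cleft c2) (cright c2); set R2 := pb_right (cleft c2) (cright c2).
      set P' := pb_left R1 L2.
      rewrite -(mulmxA z) -(mulmxA P') -[in RHS](mulmxA (z *m P')) /L1 /R1 pb_leftA pb_rightB.
      by rewrite mulmxA.
    rewrite eu.
    set L1 := pb_left (cleft c1) (cright c1); set R1 := pb_right (cleft c1) (cright c1).
    set L2 := pb_left (cleft c2) (cright c2); set R2 := pb_right (cleft c2) (cright c2).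
    set P' := pb_left R1 L2; set Q' := pb_right R1 L2.
    rewrite -(mulmxA z) -(mulmxA Q') /R2 pb_rightB -pb_leftA -/L2.
    rewrite (mulmxA Q') /Q' pb_rightB -pb_leftA -/P'.
    by rewrite !mulmxA.
  + move=> /(iffLR (ppo_key nW hg1 hf2 _ _)) [w [ev eu]].
    have : (row_mx v w <= Jsp (sigma c1))%MS by rewrite sigma_mem // ev.
    case/submxP => a; rewrite /Jsp /= mul_mx_row => /eq_row_mx [ev' ew].
    have : (row_mx w u <= Jsp (sigma c2))%MS by rewrite sigma_mem // eu.
    case/submxP => b; rewrite /Jsp /= mul_mx_row => /eq_row_mx [ew' eu'].
    have : (row_mx a b <= row_mx (pb_left (pb_right (cleft c1) (cright c1)) (pb_left (cleft c2) (cright c2)))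
                                 (pb_right (pb_right (cleft c1) (cright c1)) (pb_left (cleft c2) (cright c2))))%MS.
      by rewrite pb_mem // -ew -ew'.
    case/submxP => z; rewrite mul_mx_row => /eq_row_mx [ea eb].
    apply/submxP; exists z; rewrite /Jsp /= mul_mx_row ev' eu' ea eb !mulmxA.
    by [].
Qed.

Theorem proposition4p17 :
  (* sigma sends morphisms of T_q to morphisms of S_q *)
  (forall (V W : qspace) (c : cospan V W),
      cosp_valid c -> span_valid (sigma c)) /\
  (* sigma is well defined on equivalence classes of cospans *)
  (forall (V W : qspace) (c c' : cospan V W),
      nondeg V -> nondeg W -> cosp_valid c -> cosp_valid c' ->
      cosp_equiv c c' -> span_iso (sigma c) (sigma c')) /\
  (* sigma preserves identities *)
  (forall V : qspace, nondeg V -> span_iso (sigma (cosp_id V)) (span_id V)) /\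
  (* sigma preserves composition *)
  (forall (V W U : qspace) (c1 : cospan V W) (c2 : cospan W U),
      cosp_valid c1 -> cosp_valid c2 ->
      span_iso (sigma (cosp_comp c1 c2)) (span_comp (sigma c1) (sigma c2))) /\
  (* sigma is monoidal: sigma(V ⊥ W) = V ⊥ W on objects (by typing), and on
     morphisms sigma(c ⊥ c') = sigma(c) ⊥ sigma(c') *)
  (forall (V W V' W' : qspace) (c : cospan V W) (c' : cospan V' W'),
      cosp_valid c -> cosp_valid c' ->
      span_iso (sigma (cosp_sum c c')) (span_sum (sigma c) (sigma c'))).
Proof.
split; first by move=> V W c [_ _ _ hA hB]; exact: sigma_valid.
split; first exact: part2.
split; first exact: part3.
split; first exact: part4.
exact: part5.
Qed.
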